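(* Let $B$ be a brace such that $B=\operatorname{Soc}_n(B)$ for some $n\in\mathbb{N}$. If the group $(B,\cdot)$ is supersoluble, then $B$ is supersoluble.
   Context: A brace (skew left brace) is a set $B$ with two binary operations $+$ and $\cdot$ such that $(B,+)$ and $(B,\cdot)$ are groups and $a(b+c)=ab-a+ac$ for all $a,b,c\in B$. $\lambda_a(b)=-a+ab$ defines a homomorphism $\lambda\colon(B,\cdot)\to\operatorname{Aut}(B,+)$. An ideal is a subset that is a subgroup of both groups, normal in both, and invariant under all $\lambda_b$; quotients by ideals are braces. $\operatorname{Soc}(B)=\operatorname{Ker}\lambda\cap Z(B,+)$; $\operatorname{Soc}_0(B)=\{0\}$, $\operatorname{Soc}_{k+1}(B)/\operatorname{Soc}_k(B)=\operatorname{Soc}(B/\operatorname{Soc}_k(B))$. A brace $B$ is supersoluble if there is a finite chain of ideals $\{0\}=I_0\le\dots\le I_m=B$ such that for each $i$, either $(I_{i+1}/I_i,+)$ is infinite cyclic and $I_{i+1}/I_i\le\operatorname{Soc}(B/I_i)$, or $I_{i+1}/I_i$ has prime order. A group is supersoluble in the usual sense (finite normal series with cyclic factors). *)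

(* Defs.v *)
(* skew left braces over an arbitrary (possibly infinite) carrier. *)
From Stdlib Require Import ZArith Znumtheory.

Record brace := Brace {
  carrier :> Type;
  add : carrier -> carrier -> carrier;
  opp : carrier -> carrier;
  zero : carrier;
  mul : carrier -> carrier -> carrier;
  inv : carrier -> carrier;
  one : carrier;
  addA : forall a b c, add a (add b c) = add (add a b) c;
  add0l : forall a, add zero a = a;
  add0r : forall a, add a zero = a;
  addNl : forall a, add (opp a) a = zero;
  addNr : forall a, add a (opp a) = zero;
  mulA : forall a b c, mul a (mul b c) = mul (mul a b) c;
  mul1l : forall a, mul one a = a;
  mul1r : forall a, mul a one = a;
  mulVl : forall a, mul (inv a) a = one;
  mulVr : forall a, mul a (inv a) = one;
  brace_comp : forall a b c,
    mul a (add b c) = add (add (mul a b) (opp a)) (mul a c)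
}.

Arguments add {_}. Arguments opp {_}. Arguments zero {_}.
Arguments mul {_}. Arguments inv {_}. Arguments one {_}.

Section Defs.
Variable B : brace.

Definition lam (a b : B) : B := add (opp a) (mul a b).

Definition zmul (g : B) (k : Z) : B :=
  match k with
  | Z0 => zero
  | Zpos p => Nat.iter (Pos.to_nat p) (fun y => add g y) zero
  | Zneg p => opp (Nat.iter (Pos.to_nat p) (fun y => add g y) zero)
  end.

Definition zpow (g : B) (k : Z) : B :=
  match k with
  | Z0 => one
  | Zpos p => Nat.iter (Pos.to_nat p) (fun y => mul g y) one
  | Zneg p => inv (Nat.iter (Pos.to_nat p) (fun y => mul g y) one)
  end.

Definition subset_of := B -> Prop.

Definition is_add_subgroup (I : subset_of) : Prop :=
  I zero /\ (forall x y, I x -> I y -> I (add x y)) /\ (forall x, I x -> I (opp x)).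

Definition is_mul_subgroup (I : subset_of) : Prop :=
  I one /\ (forall x y, I x -> I y -> I (mul x y)) /\ (forall x, I x -> I (inv x)).

Definition add_normal (I : subset_of) : Prop :=
  forall a x, I x -> I (add (add a x) (opp a)).

Definition mul_normal (I : subset_of) : Prop :=
  forall a x, I x -> I (mul (mul a x) (inv a)).

Definition lam_invariant (I : subset_of) : Prop :=
  forall b x, I x -> I (lam b x).

Definition is_ideal (I : subset_of) : Prop :=
  is_add_subgroup I /\ is_mul_subgroup I /\ add_normal I /\ mul_normal I /\
  lam_invariant I.

(* For an ideal I, the image of x in B/I lies in Soc(B/I) = Ker lambda ∩ Z(B/I,+):
   lambda_{x+I}(y+I) = y+I for all y, and x+I is central in (B/I,+). *)
Definition in_soc_mod (I : subset_of) (x : B) : Prop :=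
  (forall y, I (add (opp y) (lam x y))) /\
  (forall y, I (add (add (add x y) (opp x)) (opp y))).

Fixpoint soc_n (k : nat) : subset_of :=
  match k with
  | O => fun x => x = zero
  | S k' => in_soc_mod (soc_n k')
  end.

Definition add_factor_infinite_cyclic (I J : subset_of) : Prop :=
  exists g, J g /\
    (forall x, J x -> exists k : Z, I (add (opp (zmul g k)) x)) /\
    (forall k : Z, I (zmul g k) -> k = 0%Z).

Definition factor_prime_order (I J : subset_of) : Prop :=
  exists (p : nat) (f : nat -> B),
    prime (Z.of_nat p) /\
    (forall j, (j < p)%nat -> J (f j)) /\
    (forall j k, (j < p)%nat -> (k < p)%nat -> I (add (opp (f j)) (f k)) -> j = k) /\
    (forall x, J x -> exists j, (j < p)%nat /\ I (add (opp (f j)) x)).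

Definition brace_supersoluble : Prop :=
  exists (m : nat) (I : nat -> subset_of),
    (forall x, I O x <-> x = zero) /\
    (forall x, I m x) /\
    (forall i, (i <= m)%nat -> is_ideal (I i)) /\
    (forall i x, (i < m)%nat -> I i x -> I (S i) x) /\
    (forall i, (i < m)%nat ->
       (add_factor_infinite_cyclic (I i) (I (S i)) /\
        (forall x, I (S i) x -> in_soc_mod (I i) x))
       \/ factor_prime_order (I i) (I (S i))).

Definition mul_group_supersoluble : Prop :=
  exists (m : nat) (N : nat -> subset_of),
    (forall x, N O x <-> x = one) /\
    (forall x, N m x) /\
    (forall i, (i <= m)%nat -> is_mul_subgroup (N i) /\ mul_normal (N i)) /\
    (forall i x, (i < m)%nat -> N i x -> N (S i) x) /\
    (forall i, (i < m)%nat ->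
       exists g, N (S i) g /\
         forall x, N (S i) x -> exists k : Z, N i (mul (inv (zpow g k)) x)).

End Defs.

(* Main.v *)
Require Import Defs.
From Stdlib Require Import ZArith Znumtheory Lia Setoid Morphisms Arith.
From Stdlib Require Import FunctionalExtensionality PropExtensionality Classical.


Section Grp.
Set Default Proof Using "All".
Variable T : Type.
Variable op : T -> T -> T.
Variable iv : T -> T.
Variable e : T.
Hypothesis opA : forall a b c, op a (op b c) = op (op a b) c.
Hypothesis op0l : forall a, op e a = a.
Hypothesis op0r : forall a, op a e = a.
Hypothesis opNl : forall a, op (iv a) a = e.
Hypothesis opNr : forall a, op a (iv a) = e.

Lemma g_Kl a b : op (iv a) (op a b) = b.
Proof. rewrite opA, opNl, op0l; reflexivity. Qed.
Lemma g_Kl' a b : op a (op (iv a) b) = b.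
Proof. rewrite opA, opNr, op0l; reflexivity. Qed.
Lemma g_Kr a b : op (op b a) (iv a) = b.
Proof. rewrite <- opA, opNr, op0r; reflexivity. Qed.
Lemma g_Kr' a b : op (op b (iv a)) a = b.
Proof. rewrite <- opA, opNl, op0r; reflexivity. Qed.
Lemma g_cancl a b c : op a b = op a c -> b = c.
Proof. intro H. rewrite <- (g_Kl a b), H, g_Kl; reflexivity. Qed.
Lemma g_cancr a b c : op b a = op c a -> b = c.
Proof. intro H. rewrite <- (g_Kr a b), H, g_Kr; reflexivity. Qed.
Lemma g_inv_uniq a b : op a b = e -> b = iv a.
Proof. intro H. apply (g_cancl a). rewrite H, opNr; reflexivity. Qed.
Lemma g_ivK a : iv (iv a) = a.
Proof. symmetry. apply g_inv_uniq. apply opNl. Qed.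
Lemma g_iv_e : iv e = e.
Proof. symmetry. apply g_inv_uniq. apply op0l. Qed.
Lemma g_iv_op a b : iv (op a b) = op (iv b) (iv a).
Proof. symmetry. apply g_inv_uniq. rewrite opA, <- (opA a b), opNr, op0r, opNr. reflexivity. Qed.

Definition it (g : T) (n : nat) := Nat.iter n (fun y => op g y) e.
Definition gpow (g : T) (k : Z) : T :=
  match k with
  | Z0 => e
  | Zpos p => Nat.iter (Pos.to_nat p) (fun y => op g y) e
  | Zneg p => iv (Nat.iter (Pos.to_nat p) (fun y => op g y) e)
  end.

Lemma it_comm g n : op g (it g n) = op (it g n) g.
Proof. induction n; simpl. rewrite op0l, op0r; reflexivity.
  fold (it g n). rewrite IHn at 1. rewrite opA. reflexivity. Qed.

Lemma gpow_nat g n : gpow g (Z.of_nat n) = it g n.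
Proof. destruct n. reflexivity. simpl. rewrite SuccNat2Pos.id_succ. reflexivity. Qed.
Lemma gpow_negnat g n : gpow g (- Z.of_nat n) = iv (it g n).
Proof. destruct n. simpl. rewrite g_iv_e. reflexivity. simpl. rewrite SuccNat2Pos.id_succ. reflexivity. Qed.

Lemma Z_nat_cases (k : Z) : exists n, k = Z.of_nat n \/ k = - Z.of_nat n.
Proof. exists (Z.abs_nat k). rewrite Nat2Z.inj_abs_nat. lia. Qed.

Lemma gpow_succ g k : gpow g (Z.succ k) = op (gpow g k) g.
Proof.
  destruct (Z_nat_cases k) as [n [-> | ->]].
  - rewrite <- Nat2Z.inj_succ, !gpow_nat. simpl. apply it_comm.
  - destruct n.
    + simpl. rewrite op0l. unfold gpow. simpl. apply op0r.
    + replace (Z.succ (- Z.of_nat (S n))) with (- Z.of_nat n) by lia.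
      rewrite !gpow_negnat. simpl. fold (it g n). rewrite g_iv_op, g_Kr'. reflexivity.
Qed.
Lemma gpow_pred g k : gpow g (Z.pred k) = op (gpow g k) (iv g).
Proof.
  rewrite <- (Z.succ_pred k) at 2. rewrite gpow_succ, g_Kr. reflexivity.
Qed.
Lemma gpow0 g : gpow g 0 = e. Proof. reflexivity. Qed.
Lemma gpow1 g : gpow g 1 = g. Proof. simpl. apply op0r. Qed.

Lemma gpow_add g a b : gpow g (a + b) = op (gpow g a) (gpow g b).
Proof.
  revert a. induction b using Z.peano_ind; intro a.
  - rewrite Z.add_0_r, gpow0, op0r. reflexivity.
  - rewrite Z.add_succ_r, !gpow_succ, IHb, opA. reflexivity.
  - rewrite Z.add_pred_r, !gpow_pred, IHb, opA. reflexivity.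
Qed.
Lemma gpow_opp g k : gpow g (- k) = iv (gpow g k).
Proof. apply g_inv_uniq. rewrite <- gpow_add. replace (k + - k)%Z with 0%Z by lia. reflexivity. Qed.
Lemma gpow_mul g a b : gpow g (a * b) = gpow (gpow g a) b.
Proof.
  induction b using Z.peano_ind.
  - rewrite Z.mul_0_r. reflexivity.
  - rewrite Z.mul_succ_r, gpow_add, gpow_succ, IHb. reflexivity.
  - rewrite Z.mul_pred_r, gpow_pred, <- IHb, <- gpow_opp, <- gpow_add. reflexivity.
Qed.

Variable N : T -> Prop.
Hypothesis N_e : N e.
Hypothesis N_op : forall x y, N x -> N y -> N (op x y).
Hypothesis N_iv : forall x, N x -> N (iv x).
Hypothesis N_nrm : forall a x, N x -> N (op (op a x) (iv a)).

Definition cng a b := N (op (iv a) b).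

Lemma cng_refl a : cng a a. Proof. unfold cng. rewrite opNl. auto. Qed.
Lemma cng_sym a b : cng a b -> cng b a.
Proof. unfold cng. intro H. apply N_iv in H. rewrite g_iv_op, g_ivK in H. exact H. Qed.
Lemma cng_trans a b c : cng a b -> cng b c -> cng a c.
Proof. unfold cng. intros H1 H2. pose proof (N_op _ _ H1 H2) as H.
  rewrite <- opA, g_Kl' in H. exact H. Qed.
Lemma N_nrm' a x : N x -> N (op (op (iv a) x) a).
Proof. intro H. pose proof (N_nrm (iv a) x H) as H'. rewrite g_ivK in H'. exact H'. Qed.
Lemma cng_op a a' b b' : cng a a' -> cng b b' -> cng (op a b) (op a' b').
Proof. unfold cng. intros H1 H2. rewrite g_iv_op.
  (* b^-1 a^-1 a' b' = (b^-1 (a^-1 a') b) (b^-1 b') *)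
  replace (op (op (iv b) (iv a)) (op a' b')) with
    (op (op (op (iv b) (op (iv a) a')) b) (op (iv b) b')).
  apply N_op; auto. apply N_nrm'; auto.
  rewrite <- (opA _ b), g_Kl', !opA. reflexivity.
Qed.
Lemma cng_iv a a' : cng a a' -> cng (iv a) (iv a').
Proof. unfold cng. intro H. rewrite g_ivK.
  (* a (a')^-1 = a (a^-1 a')^-1 a^-1 *)
  apply N_iv in H. rewrite g_iv_op, g_ivK in H. apply (N_nrm a) in H.
  rewrite opA, g_Kr in H. exact H. Qed.
Lemma cng_gpow a a' k : cng a a' -> cng (gpow a k) (gpow a' k).
Proof. intro H. induction k using Z.peano_ind.
  - apply cng_refl.
  - rewrite !gpow_succ. apply cng_op; auto.
  - rewrite !gpow_pred. apply cng_op; auto. apply cng_iv; auto.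
Qed.
Unset Default Proof Using.
End Grp.

Lemma gpow_hom (T T' : Type) (op : T -> T -> T) (iv : T -> T) (e : T)
  (op' : T' -> T' -> T') (iv' : T' -> T') (e' : T') (f : T -> T')
  (fop : forall a b, f (op a b) = op' (f a) (f b)) (fiv : forall a, f (iv a) = iv' (f a))
  (fe : f e = e') g k : f (gpow T op iv e g k) = gpow T' op' iv' e' (f g) k.
Proof.
  destruct k; simpl; auto; [| rewrite fiv; f_equal];
  induction (Pos.to_nat p); simpl; auto; rewrite fop; f_equal; auto.
Qed.


Section Br.
Variable B : brace.
Implicit Types a b c x y : B.

Definition AG := (addA B, add0l B, add0r B, addNl B, addNr B).
Lemma addKl a b : add (opp a) (add a b) = b. Proof. exact (g_Kl B add opp zero (addA B) (add0l B) (add0r B) (addNl B) (addNr B) a b). Qed.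
Lemma addKl' a b : add a (add (opp a) b) = b. Proof. exact (g_Kl' B add opp zero (addA B) (add0l B) (add0r B) (addNl B) (addNr B) a b). Qed.
Lemma addKr a b : add (add b a) (opp a) = b. Proof. exact (g_Kr B add opp zero (addA B) (add0l B) (add0r B) (addNl B) (addNr B) a b). Qed.
Lemma addKr' a b : add (add b (opp a)) a = b. Proof. exact (g_Kr' B add opp zero (addA B) (add0l B) (add0r B) (addNl B) (addNr B) a b). Qed.
Lemma add_cancl a b c : add a b = add a c -> b = c. Proof. exact (g_cancl B add opp zero (addA B) (add0l B) (add0r B) (addNl B) (addNr B) a b c). Qed.
Lemma add_cancr a b c : add b a = add c a -> b = c. Proof. exact (g_cancr B add opp zero (addA B) (add0l B) (add0r B) (addNl B) (addNr B) a b c). Qed.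
Lemma opp_uniq a b : add a b = zero -> b = opp a. Proof. exact (g_inv_uniq B add opp zero (addA B) (add0l B) (add0r B) (addNl B) (addNr B) a b). Qed.
Lemma oppK a : opp (opp a) = a. Proof. exact (g_ivK B add opp zero (addA B) (add0l B) (add0r B) (addNl B) (addNr B) a). Qed.
Lemma opp0 : opp (@zero B) = zero. Proof. exact (g_iv_e B add opp zero (addA B) (add0l B) (add0r B) (addNl B) (addNr B)). Qed.
Lemma opp_add a b : opp (add a b) = add (opp b) (opp a). Proof. exact (g_iv_op B add opp zero (addA B) (add0l B) (add0r B) (addNl B) (addNr B) a b). Qed.

Lemma mulKl a b : mul (inv a) (mul a b) = b. Proof. exact (g_Kl B mul inv one (mulA B) (mul1l B) (mul1r B) (mulVl B) (mulVr B) a b). Qed.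
Lemma mulKl' a b : mul a (mul (inv a) b) = b. Proof. exact (g_Kl' B mul inv one (mulA B) (mul1l B) (mul1r B) (mulVl B) (mulVr B) a b). Qed.
Lemma mulKr a b : mul (mul b a) (inv a) = b. Proof. exact (g_Kr B mul inv one (mulA B) (mul1l B) (mul1r B) (mulVl B) (mulVr B) a b). Qed.
Lemma mulKr' a b : mul (mul b (inv a)) a = b. Proof. exact (g_Kr' B mul inv one (mulA B) (mul1l B) (mul1r B) (mulVl B) (mulVr B) a b). Qed.
Lemma mul_cancl a b c : mul a b = mul a c -> b = c. Proof. exact (g_cancl B mul inv one (mulA B) (mul1l B) (mul1r B) (mulVl B) (mulVr B) a b c). Qed.
Lemma inv_uniq a b : mul a b = one -> b = inv a. Proof. exact (g_inv_uniq B mul inv one (mulA B) (mul1l B) (mul1r B) (mulVl B) (mulVr B) a b). Qed.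
Lemma invK a : inv (inv a) = a. Proof. exact (g_ivK B mul inv one (mulA B) (mul1l B) (mul1r B) (mulVl B) (mulVr B) a). Qed.
Lemma inv1 : inv (@one B) = one. Proof. exact (g_iv_e B mul inv one (mulA B) (mul1l B) (mul1r B) (mulVl B) (mulVr B)). Qed.
Lemma inv_mul a b : inv (mul a b) = mul (inv b) (inv a). Proof. exact (g_iv_op B mul inv one (mulA B) (mul1l B) (mul1r B) (mulVl B) (mulVr B) a b). Qed.

Lemma mul_a0 a : mul a zero = a.
Proof. pose proof (brace_comp B a zero zero) as H. rewrite add0l in H.
  rewrite <- (add0r B (mul a zero)) in H at 1. rewrite <- addA in H. apply add_cancl in H.
  apply (f_equal (add a)) in H. rewrite addKl', add0r in H. symmetry; exact H. Qed.
Lemma one_zero : @one B = zero.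
Proof. rewrite <- (mul_a0 one). apply mul1l. Qed.

Lemma mul_lam a b : mul a b = add a (lam B a b).
Proof. unfold lam. rewrite addKl'. reflexivity. Qed.
Lemma lam_add a b c : lam B a (add b c) = add (lam B a b) (lam B a c).
Proof. unfold lam. rewrite brace_comp, !addA. reflexivity. Qed.
Lemma lam0 a : lam B a zero = zero.
Proof. unfold lam. rewrite mul_a0. apply addNl. Qed.
Lemma lam_opp a b : lam B a (opp b) = opp (lam B a b).
Proof. apply opp_uniq. rewrite <- lam_add, addNr. apply lam0. Qed.
Lemma mul_a_opp a b : mul a (opp b) = add (add a (opp (mul a b))) a.
Proof. pose proof (brace_comp B a b (opp b)) as H. rewrite addNr, mul_a0 in H.
  rewrite <- (addKl (add (mul a b) (opp a)) (mul a (opp b))), <- H, opp_add, oppK.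
  reflexivity. Qed.
Lemma lam_mul a b c : lam B (mul a b) c = lam B a (lam B b c).
Proof. unfold lam at 3. rewrite lam_add. unfold lam. rewrite mul_a_opp, mulA.
  rewrite !addA, addNl, add0l, addKr. reflexivity. Qed.
Lemma lam1 c : lam B one c = c.
Proof. unfold lam. rewrite mul1l, one_zero, opp0, add0l. reflexivity. Qed.
Lemma lamK a c : lam B a (lam B (inv a) c) = c.
Proof. rewrite <- lam_mul, mulVr. apply lam1. Qed.
Lemma lamK' a c : lam B (inv a) (lam B a c) = c.
Proof. rewrite <- lam_mul, mulVl. apply lam1. Qed.
Lemma lam_minv a b : add (opp a) b = lam B a (mul (inv a) b).
Proof. unfold lam. rewrite mulKl'. reflexivity. Qed.

Definition AX := (addA B, add0l B, add0r B, addNl B, addNr B).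
Lemma zmul_add g (a b : Z) : zmul B g (a + b) = add (zmul B g a) (zmul B g b).
Proof. exact (gpow_add B add opp zero (addA B) (add0l B) (add0r B) (addNl B) (addNr B) g a b). Qed.
Lemma zpow_add g (a b : Z) : zpow B g (a + b) = mul (zpow B g a) (zpow B g b).
Proof. exact (gpow_add B mul inv one (mulA B) (mul1l B) (mul1r B) (mulVl B) (mulVr B) g a b). Qed.
Lemma zmul_opp g (a : Z) : zmul B g (- a) = opp (zmul B g a).
Proof. exact (gpow_opp B add opp zero (addA B) (add0l B) (add0r B) (addNl B) (addNr B) g a). Qed.
Lemma zpow_opp g (a : Z) : zpow B g (- a) = inv (zpow B g a).
Proof. exact (gpow_opp B mul inv one (mulA B) (mul1l B) (mul1r B) (mulVl B) (mulVr B) g a). Qed.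
Lemma zmul_mul g (a b : Z) : zmul B g (a * b) = zmul B (zmul B g a) b.
Proof. exact (gpow_mul B add opp zero (addA B) (add0l B) (add0r B) (addNl B) (addNr B) g a b). Qed.
Lemma zpow_mul g (a b : Z) : zpow B g (a * b) = zpow B (zpow B g a) b.
Proof. exact (gpow_mul B mul inv one (mulA B) (mul1l B) (mul1r B) (mulVl B) (mulVr B) g a b). Qed.
Lemma zmul1 g : zmul B g 1 = g. Proof. exact (gpow1 B add opp zero (addA B) (add0l B) (add0r B) (addNl B) (addNr B) g). Qed.
Lemma zpow1 g : zpow B g 1 = g. Proof. exact (gpow1 B mul inv one (mulA B) (mul1l B) (mul1r B) (mulVl B) (mulVr B) g). Qed.
Lemma zmul0 g : zmul B g 0 = zero. Proof. reflexivity. Qed.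
Lemma zpow0 g : zpow B g 0 = one. Proof. reflexivity. Qed.
Lemma lam_zmul b g (k : Z) : lam B b (zmul B g k) = zmul B (lam B b g) k.
Proof. exact (gpow_hom B B add opp zero add opp zero (lam B b) (lam_add b) (lam_opp b) (lam0 b) g k). Qed.
End Br.


Class IsIdeal (B : brace) (I : subset_of B) : Prop := ideal_prf : is_ideal B I.

Section Cg.
Variable B : brace.
Implicit Types a b c x y : B.
Variable I : subset_of B.
Context `{HI : IsIdeal B I}.

Lemma I0 : I zero. Proof. apply HI. Qed.
Lemma Iadd x y : I x -> I y -> I (add x y). Proof. apply HI. Qed.
Lemma Iopp x : I x -> I (opp x). Proof. apply HI. Qed.
Lemma Inadd a x : I x -> I (add (add a x) (opp a)). Proof. apply HI. Qed.
Lemma I1 : I one. Proof. apply HI. Qed.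
Lemma Imul x y : I x -> I y -> I (mul x y). Proof. apply HI. Qed.
Lemma Iinv x : I x -> I (inv x). Proof. apply HI. Qed.
Lemma Inmul a x : I x -> I (mul (mul a x) (inv a)). Proof. apply HI. Qed.
Lemma Ilam b x : I x -> I (lam B b x). Proof. apply HI. Qed.

Definition eqv a b := I (add (opp a) b).

Global Instance eqv_equiv : Equivalence eqv.
Proof. split.
 - intro a. exact (cng_refl B add opp zero (addA B) (add0l B) (add0r B) (addNl B) (addNr B) I I0 Iadd Iopp Inadd a).
 - intros a b. exact (cng_sym B add opp zero (addA B) (add0l B) (add0r B) (addNl B) (addNr B) I I0 Iadd Iopp Inadd a b).
 - intros a b c. exact (cng_trans B add opp zero (addA B) (add0l B) (add0r B) (addNl B) (addNr B) I I0 Iadd Iopp Inadd a b c).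
Qed.
Global Instance add_proper : Proper (eqv ==> eqv ==> eqv) (@add B).
Proof. intros a a' Ha b b' Hb.
  exact (cng_op B add opp zero (addA B) (add0l B) (add0r B) (addNl B) (addNr B) I I0 Iadd Iopp Inadd a a' b b' Ha Hb). Qed.
Global Instance opp_proper : Proper (eqv ==> eqv) (@opp B).
Proof. intros a a' Ha.
  exact (cng_iv B add opp zero (addA B) (add0l B) (add0r B) (addNl B) (addNr B) I I0 Iadd Iopp Inadd a a' Ha). Qed.
Global Instance zmul_proper : Proper (eqv ==> eq ==> eqv) (zmul B).
Proof. intros a a' Ha k k' <-.
  exact (cng_gpow B add opp zero (addA B) (add0l B) (add0r B) (addNl B) (addNr B) I I0 Iadd Iopp Inadd a a' k Ha). Qed.

Lemma eqv_mc a b : eqv a b <-> I (mul (inv a) b).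
Proof. unfold eqv. rewrite lam_minv. split; intro H.
  - apply (Ilam (inv a)) in H. rewrite lamK' in H. exact H.
  - apply Ilam. exact H. Qed.

Global Instance mul_proper : Proper (eqv ==> eqv ==> eqv) (@mul B).
Proof. intros a a' Ha b b' Hb. rewrite eqv_mc in *.
  exact (cng_op B mul inv one (mulA B) (mul1l B) (mul1r B) (mulVl B) (mulVr B) I I1 Imul Iinv Inmul a a' b b' Ha Hb). Qed.
Global Instance inv_proper : Proper (eqv ==> eqv) (@inv B).
Proof. intros a a' Ha. rewrite eqv_mc in *.
  exact (cng_iv B mul inv one (mulA B) (mul1l B) (mul1r B) (mulVl B) (mulVr B) I I1 Imul Iinv Inmul a a' Ha). Qed.
Global Instance zpow_proper : Proper (eqv ==> eq ==> eqv) (zpow B).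
Proof. intros a a' Ha k k' <-. rewrite eqv_mc in *.
  exact (cng_gpow B mul inv one (mulA B) (mul1l B) (mul1r B) (mulVl B) (mulVr B) I I1 Imul Iinv Inmul a a' k Ha). Qed.
Global Instance lam_proper : Proper (eqv ==> eqv ==> eqv) (lam B).
Proof. intros a a' Ha b b' Hb. unfold lam. rewrite Ha, Hb. reflexivity. Qed.

Lemma eqv_0 x : I x <-> eqv zero x.
Proof. unfold eqv. rewrite opp0, add0l. tauto. Qed.
Lemma I_eqv x y : eqv x y -> I x -> I y.
Proof. intros H Hx. apply eqv_0 in Hx. apply eqv_0. rewrite Hx. exact H. Qed.
Global Instance I_proper : Proper (eqv ==> iff) I.
Proof. intros x y H. split; apply I_eqv; [exact H | symmetry; exact H]. Qed.
End Cg.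


Section Soc.
Variable B : brace.
Implicit Types a b c x y : B.
Variable I : subset_of B.
Context `{HI : IsIdeal B I}.
Notation eqv := (eqv B I).
Notation soc := (in_soc_mod B I).

Lemma I_sub_eqv a b : I (add a (opp b)) <-> eqv a b.
Proof. unfold eqv. split; intro H.
  - apply (Iopp B I) in H. rewrite opp_add, oppK in H. apply (@Inadd B I HI (opp a)) in H.
    rewrite oppK, <- addA, addKr' in H. exact H.
  - apply (@Inadd B I HI a) in H. rewrite addKl' in H.
    apply (Iopp B I) in H. rewrite opp_add, oppK in H. exact H.
Qed.

Lemma soc_iff x : soc x <-> (forall y, eqv (lam B x y) y) /\ (forall y, eqv (add x y) (add y x)).
Proof. unfold in_soc_mod. split; intros [H1 H2]; split; intro y.
  - symmetry. apply H1.
  - specialize (H2 y). apply I_sub_eqv in H2. transitivity (add (add (add x y) (opp x)) x).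
    + rewrite addKr'. reflexivity.
    + rewrite H2. reflexivity.
  - change (eqv y (lam B x y)). symmetry. apply H1.
  - apply I_sub_eqv. rewrite H2. rewrite addKr. reflexivity.
Qed.

Lemma soc_lam x y : soc x -> eqv (lam B x y) y.
Proof. intro H. apply soc_iff in H. apply H. Qed.
Lemma soc_comm x y : soc x -> eqv (add x y) (add y x).
Proof. intro H. apply soc_iff in H. apply H. Qed.
Lemma soc_mul x y : soc x -> eqv (mul x y) (add x y).
Proof. intro H. rewrite mul_lam, (soc_lam x y H). reflexivity. Qed.
Lemma soc_inv x : soc x -> eqv (inv x) (opp x).
Proof. intro H. assert (E : eqv (mul x (opp x)) one).
  { rewrite soc_mul by exact H. rewrite addNr, one_zero. reflexivity. }
  rewrite <- (mul1r B (inv x)). rewrite <- E. rewrite mulA, mulVl, mul1l. reflexivity. Qed.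

Lemma soc_eqv x x' : eqv x x' -> soc x -> soc x'.
Proof. intros E H. apply soc_iff. split; intro y.
  - rewrite <- E. apply soc_lam, H.
  - rewrite <- E. apply soc_comm, H. Qed.
Global Instance soc_proper : Proper (eqv ==> iff) soc.
Proof. intros x y E. split; apply soc_eqv; [exact E | symmetry; exact E]. Qed.

Lemma soc0 : soc zero.
Proof. apply soc_iff. split; intro y.
  - rewrite <- one_zero, lam1. reflexivity.
  - rewrite add0l, add0r. reflexivity. Qed.
Lemma soc_add x1 x2 : soc x1 -> soc x2 -> soc (add x1 x2).
Proof. intros H1 H2. apply soc_iff. split; intro y.
  - rewrite <- (soc_mul x1 x2 H1). rewrite lam_mul. rewrite (soc_lam x2 y H2). apply soc_lam, H1.
  - rewrite <- addA. rewrite (soc_comm x2 y H2). rewrite addA. rewrite (soc_comm x1 y H1).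
    rewrite <- addA. reflexivity. Qed.
Lemma soc_opp x : soc x -> soc (opp x).
Proof. intro H. apply soc_iff. split; intro y.
  - rewrite <- (soc_inv x H). rewrite <- (lamK B x y) at 2. symmetry. apply soc_lam, H.
  - transitivity (add (add (opp x) (add y x)) (opp x)).
    + rewrite !addA, addKr. reflexivity.
    + rewrite <- (soc_comm x y H). rewrite addKl. reflexivity. Qed.
Lemma soc_lam_comm b x y : soc x -> eqv (add (lam B b x) y) (add y (lam B b x)).
Proof. intro H. rewrite <- (lamK B b y) at 1. rewrite <- lam_add.
  rewrite (soc_comm x _ H). rewrite lam_add, lamK. reflexivity. Qed.
Lemma soc_conj b x : soc x -> eqv (mul (mul b x) (inv b)) (lam B b x).
Proof. intro H. rewrite <- mulA. rewrite (soc_mul x _ H). rewrite brace_comp, mulVr, one_zero, add0r.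
  rewrite mul_lam. rewrite <- addA. rewrite (soc_lam_comm b x (opp b) H). rewrite addKl'. reflexivity. Qed.
Lemma soc_lamI b x : soc x -> soc (lam B b x).
Proof. intro H. apply soc_iff. split; intro y.
  - rewrite <- (soc_conj b x H). rewrite !lam_mul. rewrite (soc_lam x _ H). rewrite lamK. reflexivity.
  - apply soc_lam_comm, H. Qed.

Global Instance soc_ideal : IsIdeal B soc.
Proof. split; [|split; [|split; [|split]]].
  - split; [exact soc0 | split; [exact soc_add | exact soc_opp]].
  - split; [rewrite one_zero; exact soc0 | split].
    + intros x y Hx Hy. rewrite (soc_mul x y Hx). apply soc_add; auto.
    + intros x Hx. rewrite (soc_inv x Hx). apply soc_opp; auto.
  - intros a x Hx.
    assert (E : eqv (add (add a x) (opp a)) x).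
    { rewrite <- (soc_comm x a Hx). rewrite addKr. reflexivity. }
    rewrite E. exact Hx.
  - intros a x Hx. rewrite (soc_conj a x Hx). apply soc_lamI, Hx.
  - intros b x Hx. apply soc_lamI, Hx.
Qed.

Lemma soc_zpow x k : soc x -> eqv (zpow B x k) (zmul B x k).
Proof. intro H. induction k using Z.peano_ind.
  - simpl. rewrite one_zero. reflexivity.
  - rewrite <- Z.add_1_l, zpow_add, zmul_add, zpow1, zmul1.
    rewrite (soc_mul x _ H), IHk. reflexivity.
  - replace (Z.pred k) with (-1 + k)%Z by lia. rewrite zpow_add, zmul_add.
    replace (zpow B x (-1)) with (inv x) by (simpl; rewrite mul1r; reflexivity).
    replace (zmul B x (-1)) with (opp x) by (simpl; rewrite add0r; reflexivity).
    rewrite (soc_inv x H). rewrite (soc_mul (opp x) _ (soc_opp x H)), IHk. reflexivity.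
Qed.
End Soc.


Lemma set_ext (B : brace) (P Q : subset_of B) : (forall x, P x <-> Q x) -> P = Q.
Proof. intro H. apply functional_extensionality. intro x. apply propositional_extensionality. apply H. Qed.

Definition good (B : brace) (J K : subset_of B) : Prop :=
  (add_factor_infinite_cyclic B J K /\ (forall x, K x -> in_soc_mod B J x))
  \/ factor_prime_order B J K.

Inductive reach (B : brace) : subset_of B -> subset_of B -> Prop :=
| reach_refl I : IsIdeal B I -> reach B I I
| reach_step I J K : reach B I J -> IsIdeal B K -> (forall x, J x -> K x) -> good B J K -> reach B I K.

Lemma reach_trans B I J K : reach B I J -> reach B J K -> reach B I K.
Proof. intros HA HB. revert HA. induction HB; intro HA. exact HA. apply (reach_step B I J K); auto. Qed.

Lemma reach_chain B I J : reach B I J ->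
  exists m (F : nat -> subset_of B), F O = I /\ F m = J /\
    (forall i, (i <= m)%nat -> is_ideal B (F i)) /\
    (forall i x, (i < m)%nat -> F i x -> F (S i) x) /\
    (forall i, (i < m)%nat -> good B (F i) (F (S i))).
Proof.
  induction 1 as [I HI | I J K _ IH HK HJK Hg].
  - exists O, (fun _ => I). split; [reflexivity|split;[reflexivity|split;[|split]]].
    + intros; exact HI.
    + intros; exfalso; lia.
    + intros; exfalso; lia.
  - destruct IH as (m & F & H0 & Hm & Hid & Hinc & Hgood).
    exists (S m), (fun i => if Nat.leb i m then F i else K). cbv beta.
    split; [exact H0|]. split.
    + replace (Nat.leb (S m) m) with false. reflexivity. symmetry. apply Nat.leb_gt. lia. 
    + split; [|split].
      * intros i Hi. destruct (Nat.leb i m) eqn:E. apply Hid. apply Nat.leb_le; auto. exact HK.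
      * intros i x Hi Hx. destruct (Nat.leb i m) eqn:E; [|apply Nat.leb_gt in E; lia].
        apply Nat.leb_le in E. destruct (Nat.leb (S i) m) eqn:E2.
        -- apply Hinc; auto. apply Nat.leb_le in E2. lia.
        -- apply Nat.leb_gt in E2. assert (i = m) by lia. subst i. rewrite Hm in Hx. auto.
      * intros i Hi. destruct (Nat.leb i m) eqn:E; [|apply Nat.leb_gt in E; lia].
        apply Nat.leb_le in E. destruct (Nat.leb (S i) m) eqn:E2.
        -- apply Hgood. apply Nat.leb_le in E2. lia.
        -- apply Nat.leb_gt in E2. assert (i = m) by lia. subst i. rewrite Hm. exact Hg.
Qed.

Lemma reach_sup B : reach B (fun x => x = zero) (fun _ => True) -> brace_supersoluble B.
Proof. intro H. destruct (reach_chain B _ _ H) as (m & F & H0 & Hm & Hid & Hinc & Hgood).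
  exists m, F. rewrite H0, Hm. split; [tauto|split;[tauto|split;[|split]]]; auto.
Qed.

Lemma Z_min_pos (P : Z -> Prop) : (exists a, 0 < a /\ P a) ->
  exists d, 0 < d /\ P d /\ forall a, 0 < a -> P a -> d <= a.
Proof.
  intros [a [Ha Pa]].
  assert (forall n : nat, forall a, 0 < a -> P a -> (Z.to_nat a <= n)%nat -> 
     exists d, 0 < d /\ P d /\ forall a, 0 < a -> P a -> d <= a) as Hn.
  { induction n; intros b Hb Pb Hbn. lia.
    destruct (classic (exists c, 0 < c < b /\ P c)) as [[c [Hc Pc]] | Hno].
    - apply (IHn c); auto; lia.
    - exists b. split; auto. split; auto. intros c Hc Pc. 
      destruct (Z_lt_le_dec c b); auto. exfalso. apply Hno. exists c. split; auto; lia. }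
  apply (Hn (Z.to_nat a) a); auto.
Qed.

Lemma Z_subgroup (S : Z -> Prop) : S 0 -> (forall a b, S a -> S b -> S (a + b)) ->
  (forall a, S a -> S (- a)) -> exists d, 0 <= d /\ forall a, S a <-> (d | a).
Proof.
  intros S0 Sadd Sopp.
  assert (Smul : forall a q, S a -> S (q * a)).
  { intros a q Ha. induction q using Z.peano_ind.
    - exact S0.
    - rewrite Z.mul_succ_l. auto.
    - rewrite Z.mul_pred_l. apply Sadd; auto. }
  destruct (classic (exists a, 0 < a /\ S a)) as [Hex | Hno].
  - destruct (Z_min_pos S Hex) as (d & Hd & Sd & Hmin).
    exists d. split. lia. intro a. split.
    + intro Ha. apply Z.mod_divide. lia.
      pose proof (Z.mod_pos_bound a d Hd).
      assert (S (a mod d)). { rewrite Z.mod_eq by lia. apply Sadd; auto. 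
        rewrite <- Z.mul_opp_r, Z.mul_comm. apply Smul; auto. }
      destruct (Z.eq_dec (a mod d) 0); auto. assert (d <= a mod d) by (apply Hmin; auto; lia). lia.
    + intros [q ->]. apply Smul; auto.
  - exists 0. split. lia. intro a. split.
    + intro Ha. destruct (Z.lt_trichotomy a 0) as [Hl|[He|Hg]].
      * exfalso. apply Hno. exists (- a). split. lia. auto.
      * subst. apply Z.divide_0_r.
      * exfalso. apply Hno. eauto.
    + intro H. apply Z.divide_0_l in H. subst. exact S0.
Qed.

Lemma prime_divisor (d : Z) : 1 < d -> exists p, prime p /\ (p | d).
Proof.
  intro Hd. assert (forall n : nat, forall d, 1 < d -> (Z.to_nat d <= n)%nat -> exists p, prime p /\ (p | d)) as H.
  { induction n; intros e He Hen. lia.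
    destruct (prime_dec e) as [Hp | Hnp].
    - exists e. split; auto. apply Z.divide_refl.
    - destruct (not_prime_divide e He Hnp) as [m [Hm Hdiv]].
      destruct (IHn m) as [p [Hp Hpm]]; try lia.
      exists p. split; auto. eapply Z.divide_trans; eauto. }
  apply (H (Z.to_nat d) d); auto.
Qed.


Section Cyc.
Variable B : brace.
Implicit Types a b c x y : B.

Lemma eqv_mono (U V : subset_of B) : (forall x, U x -> V x) -> forall a b, eqv B U a b -> eqv B V a b.
Proof. unfold eqv. auto. Qed.
Lemma soc_mono (U V : subset_of B) : (forall x, U x -> V x) -> forall x, in_soc_mod B U x -> in_soc_mod B V x.
Proof. unfold in_soc_mod. intros H x [H1 H2]. split; intro y; auto. Qed.
Lemma V_eqv (U V : subset_of B) `{IsIdeal B V} : (forall x, U x -> V x) ->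
  forall a b, eqv B U a b -> V a -> V b.
Proof. intros HUV a b E Ha. rewrite <- (addKl' B a b). apply Iadd; auto. Qed.
Lemma Izmul (V : subset_of B) `{IsIdeal B V} g k : V g -> V (zmul B g k).
Proof. intro Hg. induction k using Z.peano_ind.
  - change (V zero). apply (I0 B V).
  - rewrite <- Z.add_1_r, zmul_add, zmul1. apply Iadd; auto.
  - replace (Z.pred k) with (k + - (1))%Z by lia. rewrite zmul_add, zmul_opp, zmul1.
    apply Iadd; auto. apply Iopp; auto.
Qed.

Section W.
Variables (U V : subset_of B) (h : B) (p : Z).
Context `{HU : IsIdeal B U} `{HV : IsIdeal B V}.
Hypothesis HUV : forall x, U x -> V x.
Hypothesis HVs : forall x, V x -> in_soc_mod B U x.
Hypothesis Vh : V h.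
Hypothesis Hgen : forall x, V x -> exists k, eqv B U (zmul B h k) x.
Definition W := fun x => exists k, eqv B U (zmul B (zmul B h p) k) x.

Lemma W_V x : W x -> V x.
Proof. intros [k Hk]. apply (V_eqv U V HUV _ _ Hk). apply (Izmul V). apply (Izmul V). exact Vh. Qed.
Lemma W_eqv x y : eqv B U x y -> W x -> W y.
Proof. intros E [k Hk]. exists k. rewrite Hk. exact E. Qed.
Lemma W_add x y : W x -> W y -> W (add x y).
Proof. intros [k1 H1] [k2 H2]. exists (k1 + k2)%Z. rewrite zmul_add, H1, H2. reflexivity. Qed.
Lemma W_opp x : W x -> W (opp x).
Proof. intros [k H1]. exists (- k)%Z. rewrite zmul_opp, H1. reflexivity. Qed.
Lemma W0 : W zero.
Proof. exists 0%Z. reflexivity. Qed.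
Lemma W_lam b x : W x -> W (lam B b x).
Proof. intros [k Hk]. destruct (Hgen (lam B b h) (Ilam B V b h Vh)) as [s Hs].
  exists (s * k)%Z. rewrite <- Hk. rewrite lam_zmul, lam_zmul, <- Hs.
  rewrite <- !zmul_mul. replace (s * (p * k))%Z with (p * (s * k))%Z by lia. reflexivity. Qed.

Global Instance W_ideal : IsIdeal B W.
Proof. split; [|split; [|split; [|split]]].
  - split; [exact W0 | split; [exact W_add | exact W_opp]].
  - split; [rewrite one_zero; exact W0 | split].
    + intros x y Hx Hy. apply (W_eqv (add x y)). symmetry. apply soc_mul; auto. apply HVs, W_V, Hx.
      apply W_add; auto.
    + intros x Hx. apply (W_eqv (opp x)). symmetry. apply soc_inv; auto. apply HVs, W_V, Hx.
      apply W_opp; auto.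
  - intros a x Hx. apply (W_eqv x); auto.
    rewrite <- (soc_comm B U x a (HVs x (W_V x Hx))). rewrite addKr. reflexivity.
  - intros a x Hx. apply (W_eqv (lam B a x)). symmetry. apply soc_conj; auto. apply HVs, W_V, Hx.
    apply W_lam; auto.
  - intros b x Hx. apply W_lam; auto.
Qed.
End W.

Lemma eqv_zmul_sub (U : subset_of B) `{IsIdeal B U} h (a b : Z) :
  eqv B U (zmul B h a) (zmul B h b) <-> U (zmul B h (- a + b)).
Proof. unfold eqv. rewrite zmul_add, zmul_opp. tauto. Qed.

Lemma cyc_aux (U : subset_of B) `{HU : IsIdeal B U} : forall (n : nat) (d : Z) (V : subset_of B) (h : B),
  0 < d -> (Z.to_nat d <= n)%nat -> IsIdeal B V -> (forall x, U x -> V x) ->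
  (forall x, V x -> in_soc_mod B U x) -> V h ->
  (forall x, V x -> exists k, eqv B U (zmul B h k) x) ->
  (forall a : Z, U (zmul B h a) <-> (d | a)) -> reach B U V.
Proof.
  induction n; intros d V h Hd Hdn HV HUV HVs Vh Hgen HS. lia.
  destruct (Z.eq_dec d 1) as [-> | Hd1].
  - assert (E : V = U).
    { apply set_ext. intro x. split; auto. intro Hx. destruct (Hgen x Hx) as [k Hk].
      rewrite <- Hk. apply HS. apply Z.divide_1_l. }
    rewrite E. apply reach_refl. exact HU.
  - destruct (prime_divisor d) as [p [Hp [q Hq]]]. lia.
    pose proof (prime_ge_2 p Hp) as Hp2.
    assert (Hq0 : 0 < q) by nia. assert (Hqd : q < d) by nia.
    pose (W := W U h p).
    assert (HW : IsIdeal B W) by (apply W_ideal with (V := V); auto).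
    assert (HWV : forall x, W x -> V x) by (intros x Hx; apply (W_V U V h p HUV Vh x Hx)).
    assert (RW : reach B U W).
    { apply (IHn q W (zmul B h p)); auto; try lia.
      - intros x Hx. exists 0%Z. change (eqv B U zero x). exact (proj1 (eqv_0 B U x) Hx).
      - exists 1%Z. rewrite zmul1. reflexivity.
      - intro a. rewrite <- zmul_mul, HS, Hq, (Z.mul_comm q p).
        apply Z.mul_divide_cancel_l. lia. }
    apply (reach_step B U W V RW HV HWV). right.
    exists (Z.to_nat p), (fun j => zmul B h (Z.of_nat j)).
    split; [rewrite Z2Nat.id by lia; exact Hp|]. split; [|split].
    + intros j _. apply (Izmul V). exact Vh.
    + intros j k Hj Hk [t Ht]. cbv beta in Ht.
      rewrite <- zmul_opp, <- zmul_add in Ht. rewrite <- zmul_mul in Ht.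
      apply (proj1 (eqv_zmul_sub U h _ _)) in Ht. apply HS in Ht. rewrite Hq in Ht.
      assert (Hpd : (p | - (p * t) + (- Z.of_nat j + Z.of_nat k))).
      { eapply Z.divide_trans; [|exact Ht]. exists q. reflexivity. }
      assert (Hpd2 : (p | - Z.of_nat j + Z.of_nat k)).
      { replace (- Z.of_nat j + Z.of_nat k)%Z with ((- (p * t) + (- Z.of_nat j + Z.of_nat k)) + p * t)%Z by lia.
        apply Z.divide_add_r; auto. exists t. lia. }
      destruct Hpd2 as [c Hc]. assert (Z.of_nat j < p) by lia. assert (Z.of_nat k < p) by lia. assert (c = 0) by (destruct (Z.lt_trichotomy c 0) as [?|[?|?]]; nia). subst c. lia.
    + intros x Hx. destruct (Hgen x Hx) as [k Hk].
      exists (Z.to_nat (k mod p)). pose proof (Z.mod_pos_bound k p ltac:(lia)).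
      split. lia. exists (k / p)%Z. rewrite Z2Nat.id by lia. rewrite <- Hk.
      rewrite <- zmul_opp, <- zmul_add, <- zmul_mul. f_equiv. pose proof (Z.div_mod k p). lia.
Qed.

Lemma step_cyclic (U V : subset_of B) (h : B) `{HU : IsIdeal B U} `{HV : IsIdeal B V} :
  (forall x, U x -> V x) -> (forall x, V x -> in_soc_mod B U x) -> V h ->
  (forall x, V x -> exists k, eqv B U (zmul B h k) x) -> reach B U V.
Proof.
  intros HUV HVs Vh Hgen.
  destruct (Z_subgroup (fun m : Z => U (zmul B h m))) as [d [Hd HS]].
  - change (U zero). apply (I0 B U).
  - intros m1 m2 Ha Hb. rewrite zmul_add. apply (Iadd B U); auto.
  - intros m1 Ha. rewrite zmul_opp. apply (Iopp B U); auto.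
  - destruct (Z.eq_dec d 0) as [-> | Hd0].
    + apply (reach_step B U U V (reach_refl B U HU) HV HUV). left. split; auto.
      exists h. split; auto. split.
      * intros x Hx. apply Hgen, Hx.
      * intros k Hk. apply HS in Hk. apply Z.divide_0_l in Hk. exact Hk.
    + apply (cyc_aux U (Z.to_nat d) d V h); auto. lia.
Qed.
End Cyc.


Section Core.
Variable B : brace.
Implicit Types a b c x y : B.
Variables (I J : subset_of B).
Context `{HI : IsIdeal B I} `{HJ : IsIdeal B J}.
Hypothesis HIJ : forall x, I x -> J x.
Hypothesis HJs : forall x, J x -> in_soc_mod B I x.
Variables (m : nat) (N : nat -> subset_of B).
Hypothesis HN0 : forall x, N O x <-> x = one.
Hypothesis HNm : forall x, N m x.
Hypothesis HNg : forall i, (i <= m)%nat -> is_mul_subgroup B (N i) /\ mul_normal B (N i).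
Hypothesis HNinc : forall i x, (i < m)%nat -> N i x -> N (S i) x.
Hypothesis HNcyc : forall i, (i < m)%nat ->
       exists g, N (S i) g /\
         forall x, N (S i) x -> exists k : Z, N i (mul (inv (zpow B g k)) x).

Definition Uj (j : nat) : subset_of B := fun x => J x /\ exists u, N j u /\ eqv B I u x.

Lemma J_eqv x y : eqv B I x y -> J x -> J y.
Proof. apply (V_eqv B I J HIJ). Qed.

Lemma Nzpow j g k : (j <= m)%nat -> N j g -> N j (zpow B g k).
Proof. intros Hj Hg. destruct (HNg j Hj) as [[N1 [Nmul Ninv]] _]. induction k using Z.peano_ind.
  - exact N1.
  - rewrite <- Z.add_1_r, zpow_add, zpow1. auto.
  - replace (Z.pred k) with (k + - (1))%Z by lia. rewrite zpow_add, zpow_opp, zpow1. auto.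
Qed.
Lemma Jzpow g k : J g -> J (zpow B g k).
Proof. intros Hg. induction k using Z.peano_ind.
  - change (J one). apply (I1 B J).
  - rewrite <- Z.add_1_r, zpow_add, zpow1. apply (Imul B J); auto.
  - replace (Z.pred k) with (k + - (1))%Z by lia. rewrite zpow_add, zpow_opp, zpow1.
    apply (Imul B J); auto. apply (Iinv B J); auto.
Qed.

Lemma U_eqv j x y : eqv B I x y -> Uj j x -> Uj j y.
Proof. intros E [Jx [u [Nu Hu]]]. split. apply (J_eqv x y E Jx). exists u. split; auto.
  rewrite Hu. exact E. Qed.

Lemma U_ideal j : (j <= m)%nat -> IsIdeal B (Uj j).
Proof. intro Hj. destruct (HNg j Hj) as [[N1 [Nmul Ninv]] Nnrm].
  assert (Hs : forall x, Uj j x -> in_soc_mod B I x) by (intros x [Hx _]; auto).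
  assert (U0 : Uj j zero). { split. apply (I0 B J). exists one. split; auto. rewrite one_zero. reflexivity. }
  assert (Uadd : forall x y, Uj j x -> Uj j y -> Uj j (add x y)).
  { intros x y [Jx [u [Nu Hu]]] [Jy [v [Nv Hv]]]. split. apply (Iadd B J); auto.
    exists (mul u v). split; auto. rewrite <- Hu, <- Hv. apply soc_mul; auto. apply HJs.
    apply (J_eqv x u); auto. symmetry; auto. }
  assert (Uopp : forall x, Uj j x -> Uj j (opp x)).
  { intros x [Jx [u [Nu Hu]]]. split. apply (Iopp B J); auto.
    exists (inv u). split; auto. rewrite <- Hu. apply soc_inv; auto. apply HJs.
    apply (J_eqv x u); auto. symmetry; auto. }
  assert (Uconj : forall b x, Uj j x -> Uj j (mul (mul b x) (inv b))).
  { intros b x [Jx [u [Nu Hu]]]. split. apply (Inmul B J); auto.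
    exists (mul (mul b u) (inv b)). split. apply Nnrm; auto. rewrite Hu. reflexivity. }
  assert (Ulam : forall b x, Uj j x -> Uj j (lam B b x)).
  { intros b x Hx. apply (U_eqv j (mul (mul b x) (inv b))). apply soc_conj; auto. auto. }
  split; [|split; [|split; [|split]]].
  - split; [exact U0 | split; [exact Uadd | exact Uopp]].
  - split; [rewrite one_zero; exact U0 | split].
    + intros x y Hx Hy. apply (U_eqv j (add x y)). symmetry. apply soc_mul; auto. auto.
    + intros x Hx. apply (U_eqv j (opp x)). symmetry. apply soc_inv; auto. auto.
  - intros a x Hx. apply (U_eqv j x); auto.
    rewrite <- (soc_comm B I x a (Hs x Hx)). rewrite addKr. reflexivity.
  - intros a x Hx. auto.
  - intros b x Hx. auto.
Qed.

Lemma U_0 : Uj O = I.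
Proof. apply set_ext. intro x. split.
  - intros [Jx [u [Nu Hu]]]. apply HN0 in Nu. subst u. rewrite one_zero in Hu.
    apply (eqv_0 B I x). exact Hu.
  - intro Hx. split; auto. exists one. split. apply HN0; reflexivity.
    rewrite one_zero. apply (eqv_0 B I x). exact Hx.
Qed.
Lemma U_m : Uj m = J.
Proof. apply set_ext. intro x. split.
  - intros [Jx _]. exact Jx.
  - intro Jx. split; auto. exists x. split; auto. reflexivity.
Qed.
Lemma I_U j : (j <= m)%nat -> forall x, I x -> Uj j x.
Proof. intros Hj x Hx. split; auto. exists one. destruct (HNg j Hj) as [[N1 _] _]. split; auto.
  rewrite one_zero. apply (eqv_0 B I x). exact Hx. Qed.
Lemma U_inc j : (j < m)%nat -> forall x, Uj j x -> Uj (S j) x.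
Proof. intros Hj x [Jx [u [Nu Hu]]]. split; auto. exists u. split; auto. Qed.
Lemma U_soc j : (j < m)%nat -> forall x, Uj (S j) x -> in_soc_mod B (Uj j) x.
Proof. intros Hj x [Jx _]. apply (soc_mono B I). apply I_U. lia. auto. Qed.

Lemma U_gen j : (j < m)%nat -> exists h, Uj (S j) h /\
  forall x, Uj (S j) x -> exists k, eqv B (Uj j) (zmul B h k) x.
Proof.
  intro Hj. destruct (HNcyc j Hj) as [g [Ng Hg]].
  destruct (HNg j ltac:(lia)) as [[N1 [Nmul Ninv]] Nnrm].
  destruct (HNg (S j) ltac:(lia)) as [[N1' [Nmul' Ninv']] Nnrm'].
  destruct (Z_subgroup (fun k => exists w, N j w /\ J (mul (zpow B g k) w))) as [d [Hd HK]].
  - exists one. split; auto. rewrite mul1l. apply (I1 B J).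
  - intros k1 k2 [w1 [Nw1 Jw1]] [w2 [Nw2 Jw2]].
    exists (mul (mul (mul (inv (zpow B g k2)) w1) (zpow B g k2)) w2). split.
    + apply Nmul; auto. pose proof (Nnrm (inv (zpow B g k2)) w1 Nw1) as H. rewrite invK in H. exact H.
    + rewrite zpow_add. replace (mul (mul (zpow B g k1) (zpow B g k2))
        (mul (mul (mul (inv (zpow B g k2)) w1) (zpow B g k2)) w2)) with
        (mul (mul (zpow B g k1) w1) (mul (zpow B g k2) w2)).
      apply (Imul B J); auto.
      rewrite !mulA, mulKr. reflexivity.
  - intros k [w [Nw Jw]]. exists (mul (mul (zpow B g k) (inv w)) (inv (zpow B g k))). split.
    + apply Nnrm. auto.
    + rewrite zpow_opp. replace (mul (inv (zpow B g k)) (mul (mul (zpow B g k) (inv w)) (inv (zpow B g k))))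
        with (inv (mul (zpow B g k) w)). apply (Iinv B J); auto.
      rewrite !mulA, mulVl, mul1l, inv_mul. reflexivity.
  - destruct (proj2 (HK d) (Z.divide_refl d)) as [wd [Nwd Jwd]].
    set (h := mul (zpow B g d) wd).
    exists h. split.
    + split; auto. exists h. split; [|reflexivity]. apply Nmul'. apply Nzpow; auto. apply HNinc; auto.
    + intros x [Jx [u [Nu Hu]]]. destruct (Hg u Nu) as [k Hk].
      assert (Ju : J u) by (apply (J_eqv x u); auto; symmetry; auto).
      assert (Kk : exists w, N j w /\ J (mul (zpow B g k) w)).
      { exists (mul (inv (zpow B g k)) u). split; auto. rewrite mulKl'. exact Ju. }
      destruct (proj1 (HK k) Kk) as [t Ht].
      exists t. 
      assert (HIU : forall y, I y -> Uj j y) by (apply I_U; lia).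
      pose proof (U_ideal j ltac:(lia)) as HU.
      transitivity (zpow B h t).
      * apply (eqv_mono B I); auto. symmetry. apply soc_zpow; auto.
      * apply (eqv_mc B (Uj j)). split.
        -- apply (Imul B J). apply (Iinv B J). apply Jzpow. exact Jwd. exact Jx.
        -- exists (mul (mul (inv (zpow B h t)) (zpow B g k)) (mul (inv (zpow B g k)) u)). split.
           ++ apply Nmul; auto.
              assert (C : cng B mul inv (N j) h (zpow B g d)).
              { unfold cng. unfold h. rewrite inv_mul, <- mulA, mulVl, mul1r. auto. }
              pose proof (cng_gpow B mul inv one (mulA B) (mul1l B) (mul1r B) (mulVl B) (mulVr B)
                 (N j) N1 Nmul Ninv Nnrm h (zpow B g d) t C) as C2.
              unfold cng in C2. change (gpow B mul inv one h t) with (zpow B h t) in C2.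
              change (gpow B mul inv one (zpow B g d) t) with (zpow B (zpow B g d) t) in C2.
              rewrite <- zpow_mul, Z.mul_comm, <- Ht in C2. exact C2.
           ++ rewrite <- mulA, mulKl'. rewrite Hu. reflexivity.
Qed.

Lemma core_reach : reach B I J.
Proof.
  assert (forall j, (j <= m)%nat -> reach B I (Uj j)).
  { induction j; intro Hj.
    - rewrite U_0. apply reach_refl. exact HI.
    - apply (reach_trans B I (Uj j)). apply IHj. lia.
      destruct (U_gen j ltac:(lia)) as [h [Uh Hgen]].
      pose proof (U_ideal j ltac:(lia)). pose proof (U_ideal (S j) ltac:(lia)).
      apply (step_cyclic B (Uj j) (Uj (S j)) h); auto.
      + apply U_inc. lia.
      + apply U_soc. lia. }
  rewrite <- U_m. apply H. lia.
Qed.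
End Core.


Lemma zero_ideal (B : brace) : IsIdeal B (fun x : B => x = zero).
Proof. split; [|split; [|split; [|split]]].
  - split; [reflexivity | split].
    + intros x y -> ->. apply add0l.
    + intros x ->. apply opp0.
  - split; [apply one_zero | split].
    + intros x y -> ->. rewrite <- one_zero. apply mul1l.
    + intros x ->. rewrite <- one_zero. apply inv1.
  - intros a x ->. rewrite add0r. apply addNr.
  - intros a x ->. rewrite <- one_zero, mul1r. apply mulVr.
  - intros b x ->. apply lam0.
Qed.

Lemma socn_ideal (B : brace) k : IsIdeal B (soc_n B k).
Proof. induction k. apply zero_ideal. simpl. apply (soc_ideal B (soc_n B k)). Qed.

Lemma socn_sub (B : brace) k x : soc_n B k x -> soc_n B (S k) x.
Proof. intro H. pose proof (socn_ideal B k). simpl.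
  apply (soc_eqv B (soc_n B k) zero). apply (eqv_0 B (soc_n B k) x). exact H.
  apply soc0. all: assumption. Qed.

Theorem theorem3p28 (B : brace) (n : nat) :
  (forall x : B, soc_n B n x) ->
  mul_group_supersoluble B ->
  brace_supersoluble B.
Proof.
  intros Hn [m [N [HN0 [HNm [HNg [HNinc HNcyc]]]]]].
  apply reach_sup.
  assert (forall k, reach B (soc_n B O) (soc_n B k)).
  { induction k. apply reach_refl. apply socn_ideal.
    apply (reach_trans B _ (soc_n B k)); auto.
    pose proof (socn_ideal B k). pose proof (socn_ideal B (S k)).
    apply (core_reach B (soc_n B k) (soc_n B (S k))) with (m := m) (N := N); auto.
    apply socn_sub. }
  replace (fun _ : B => True) with (soc_n B n). apply H.
  apply set_ext. intro x. split; auto.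
Qed.
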